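(* Let $n$ be a power of $2$ and $Q=\{0,1,2,4,\dots,n/2\}\subseteq[n]$. Let $\hat x\in\mathbb{C}^n$ and define $x_q=\frac1{\sqrt n}\sum_{f'\in[n]}\hat x_{f'}e^{2\pi\sqrt{-1}\,qf'/n}$ for $q\in[n]$. Suppose there is $f\in[n]$ with $\hat x_f\ne0$ and $|\hat x_f|\ge3\,\|\hat x_{[n]\setminus\{f\}}\|_1$. Then $f$ is uniquely determined by the samples $(x_q)_{q\in Q}$, and it can be computed from them using $O(\log n)$ arithmetic operations.
   Context: $[n]=\{0,\dots,n-1\}$; $\hat x_{[n]\setminus\{f\}}$ is $\hat x$ with its $f$-th coordinate set to zero; $\|\cdot\|_1$ is the $\ell_1$ norm. *)

(* Defs.v *)
(* classical reals, complex numbers as pairs (re, im) of reals. *)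
From Stdlib Require Import Reals List Arith.
Import ListNotations.
Open Scope R_scope.

Fixpoint rsum (n : nat) (g : nat -> R) : R :=
  match n with
  | O => 0
  | S m => rsum m g + g m
  end.

Definition cmod (a b : R) : R := sqrt (a ^ 2 + b ^ 2).

(* A vector xhat in C^n is given by its real parts xr and imaginary parts xi
   (only indices < n matter).  Phase angle 2 pi q f' / n. *)
Definition phase (n q f' : nat) : R := 2 * PI * INR (q * f') / INR n.

Definition samp_re (n : nat) (xr xi : nat -> R) (q : nat) : R :=
  / sqrt (INR n) *
  rsum n (fun f' => xr f' * cos (phase n q f') - xi f' * sin (phase n q f')).
Definition samp_im (n : nat) (xr xi : nat -> R) (q : nat) : R :=
  / sqrt (INR n) *
  rsum n (fun f' => xr f' * sin (phase n q f') + xi f' * cos (phase n q f')).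

Definition Qlist (k : nat) : list nat := 0%nat :: map (fun j => Nat.pow 2 j) (seq 0 k).

(* the samples (x_q)_{q in Q}, flattened as [Re x_q; Im x_q] in the order of Qlist *)
Definition samples (k : nat) (xr xi : nat -> R) : list R :=
  flat_map (fun q => [samp_re (Nat.pow 2 k) xr xi q; samp_im (Nat.pow 2 k) xr xi q])
           (Qlist k).

Definition heavy (n : nat) (xr xi : nat -> R) (f : nat) : Prop :=
  (f < n)%nat /\ (xr f <> 0 \/ xi f <> 0) /\
  cmod (xr f) (xi f) >= 3 * rsum n (fun f' => if Nat.eqb f' f then 0 else cmod (xr f') (xi f')).

(* Model of computation: algebraic decision trees over the reals (real RAM).
   Registers hold reals, initially the input list.  Each internal node is one
   arithmetic operation / constant load (result appended as a new register) or
   one comparison (branching). *)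
Inductive binop : Type := OAdd | OSub | OMul | ODiv.

Definition apply_binop (o : binop) (a b : R) : R :=
  match o with
  | OAdd => a + b
  | OSub => a - b
  | OMul => a * b
  | ODiv => a / b
  end.

Inductive dtree : Type :=
| Leaf : nat -> dtree
| Cst : R -> dtree -> dtree
| Bin : binop -> nat -> nat -> dtree -> dtree
| Cmp : nat -> nat -> dtree -> dtree -> dtree.

Fixpoint run (t : dtree) (regs : list R) : nat :=
  match t with
  | Leaf f => f
  | Cst c t' => run t' (regs ++ [c])
  | Bin o i j t' => run t' (regs ++ [apply_binop o (nth i regs 0) (nth j regs 0)])
  | Cmp i j t1 t2 =>
      if Rle_dec (nth i regs 0) (nth j regs 0) then run t1 regs else run t2 regs
  end.

Fixpoint depth (t : dtree) : nat :=
  match t with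
  | Leaf _ => 0
  | Cst _ t' => S (depth t')
  | Bin _ _ _ t' => S (depth t')
  | Cmp _ _ t1 t2 => S (Nat.max (depth t1) (depth t2))
  end.

(* Main.v *)
Require Import Defs.
From Stdlib Require Import Reals Lra Lia Psatz List Arith.
Import ListNotations.
Open Scope R_scope.

Lemma cs2 a b c d : (a*c+b*d)^2 <= (a^2+b^2)*(c^2+d^2).
Proof. pose proof (pow2_ge_0 (a*d-b*c)).
replace ((a^2+b^2)*(c^2+d^2)) with ((a*c+b*d)^2 + (a*d-b*c)^2) by ring. lra. Qed.
Lemma sq_le x y : 0 <= y -> x^2 <= y^2 -> x <= y.
Proof. intros. destruct (Rle_dec x y); auto. exfalso.
assert (y*y < x*x) by (apply Rmult_le_0_lt_compat; lra). simpl in H0. lra. Qed.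
Lemma sq_ge x y : 0 <= y -> x^2 <= y^2 -> -y <= x.
Proof. intros. assert (-x <= y) by (apply sq_le; auto; replace ((-x)^2) with (x^2) by ring; auto). lra. Qed.

Lemma cmod_nonneg a b : 0 <= cmod a b.
Proof. unfold cmod; apply sqrt_pos. Qed.

Lemma cmod_sq a b : cmod a b * cmod a b = a^2 + b^2.
Proof. unfold cmod; apply sqrt_sqrt; nra. Qed.

Lemma cmod_tri a b c d : cmod (a + c) (b + d) <= cmod a b + cmod c d.
Proof.
  pose proof (cmod_nonneg a b). pose proof (cmod_nonneg c d).
  pose proof (cmod_sq a b). pose proof (cmod_sq c d).
  set (p := cmod a b) in *. set (r := cmod c d) in *.
  assert (Hcs : a*c + b*d <= p * r).
  { apply sq_le; [nra|]. replace ((p*r)^2) with ((p*p)*(r*r)) by ring.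
      rewrite H1, H2; apply cs2. }
  unfold cmod at 1. rewrite <- (sqrt_Rsqr (p + r)) by lra.
  apply sqrt_le_1_alt. unfold Rsqr. nra.
Qed.

Lemma cmod_rot x y t :
  cmod (x * cos t - y * sin t) (x * sin t + y * cos t) = cmod x y.
Proof.
  unfold cmod. f_equal. pose proof (sin2_cos2 t). unfold Rsqr in H.
  replace ((x * cos t - y * sin t) ^ 2 + (x * sin t + y * cos t) ^ 2)
    with ((x^2+y^2) * (sin t * sin t + cos t * cos t)) by ring.
  rewrite H; ring.
Qed.

Lemma rsum_ext n g h : (forall i, (i < n)%nat -> g i = h i) -> rsum n g = rsum n h.
Proof.
  induction n; simpl; intros H; auto.
  rewrite IHn by (intros; apply H; lia). rewrite H by lia. auto.
Qed.

Lemma rsum_split n g f : (f < n)%nat ->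
  rsum n g = rsum n (fun i => if Nat.eqb i f then 0 else g i) + g f.
Proof.
  induction n; intros Hf; [lia|]. simpl.
  destruct (Nat.eq_dec f n) as [->|Hne].
  - rewrite Nat.eqb_refl.
    rewrite (rsum_ext n (fun i => if Nat.eqb i n then 0 else g i) g); [ring|].
    intros i Hi. destruct (Nat.eqb_spec i n); [lia|auto].
  - rewrite IHn by lia. destruct (Nat.eqb_spec n f); [lia|]. ring.
Qed.

Lemma rsum_tri n h1 h2 :
  cmod (rsum n h1) (rsum n h2) <= rsum n (fun i => cmod (h1 i) (h2 i)).
Proof.
  induction n; simpl.
  - unfold cmod. replace (0^2+0^2) with 0 by ring. rewrite sqrt_0. lra.
  - eapply Rle_trans; [apply cmod_tri|]. lra.
Qed.

Lemma rsum_plus n g h : rsum n (fun i => g i + h i) = rsum n g + rsum n h.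
Proof. induction n; simpl; [ring|]. rewrite IHn; ring. Qed.

Lemma rsum_scal n c g : rsum n (fun i => c * g i) = c * rsum n g.
Proof. induction n; simpl; [ring|]. rewrite IHn; ring. Qed.

Definition Eerr (n : nat) (xr xi : nat -> R) (f : nat) :=
  rsum n (fun f' => if Nat.eqb f' f then 0 else cmod (xr f') (xi f')).

Lemma decomp n xr xi (phi : nat -> R) f : (f < n)%nat ->
  (rsum n (fun i => xr i * cos (phi i) - xi i * sin (phi i)) - (xr f * cos (phi f) - xi f * sin (phi f)))^2
  + (rsum n (fun i => xr i * sin (phi i) + xi i * cos (phi i)) - (xr f * sin (phi f) + xi f * cos (phi f)))^2
  <= (Eerr n xr xi f)^2.
Proof.
  intros Hf.
  rewrite (rsum_split n _ f Hf). rewrite (rsum_split n (fun i => xr i * sin (phi i) + xi i * cos (phi i)) f Hf).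
  match goal with |- (?A + ?B - ?B) ^ 2 + (?C + ?D - ?D) ^ 2 <= _ =>
    replace (A + B - B) with A by ring; replace (C + D - D) with C by ring end.
  pose proof (rsum_tri n (fun i => if Nat.eqb i f then 0 else xr i * cos (phi i) - xi i * sin (phi i))
     (fun i => if Nat.eqb i f then 0 else xr i * sin (phi i) + xi i * cos (phi i))) as H.
  rewrite (rsum_ext n (fun i => cmod _ _) (fun f' => if Nat.eqb f' f then 0 else cmod (xr f') (xi f'))) in H.
  2:{ intros i _. destruct (Nat.eqb i f).
      - cbv beta. unfold cmod. replace (0^2+0^2) with 0 by ring. rewrite ?sqrt_0; reflexivity.
      - apply cmod_rot. }
  fold (Eerr n xr xi f) in H.
  match goal with H : cmod ?A ?B <= _ |- _ =>
    pose proof (cmod_sq A B); pose proof (cmod_nonneg A B) end.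
  nra.
Qed.

Lemma core (a1 a2 d1 d2 e1 e2 E sg s : R) :
  a1 <> 0 \/ a2 <> 0 ->
  cmod a1 a2 >= 3 * E ->
  d1^2 + d2^2 <= E^2 -> e1^2 + e2^2 <= E^2 -> sg * sg = 1 -> 0 < s -> 0 <= E ->
  0 < sg * ((s*(sg*a1+d1)) * (s*(a1+e1)) + (s*(sg*a2+d2)) * (s*(a2+e2))).
Proof.
  intros Ha Hm Hd He Hsg Hs HE.
  pose proof (cmod_sq a1 a2). pose proof (cmod_nonneg a1 a2). set (m := cmod a1 a2) in *.
  assert (HM : 0 < a1^2 + a2^2) by (destruct Ha; nra).
  assert (Hm0 : 0 < m) by nra.
  assert (HmE : 0 <= m*E) by (apply Rmult_le_pos; lra).
  assert (C1 : -(m*E) <= a1*e1 + a2*e2).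
  { apply sq_ge; auto. eapply Rle_trans; [apply cs2|].
    replace ((m*E)^2) with ((m*m)*(E^2)) by ring. rewrite H.
    apply Rmult_le_compat_l; lra. }
  assert (C2' : -(m*E) <= d1*a1 + d2*a2).
  { apply sq_ge; auto. eapply Rle_trans; [apply cs2|].
    replace ((m*E)^2) with ((E^2)*(m*m)) by ring. rewrite H.
    apply Rmult_le_compat_r; lra. }
  assert (C2 : -(m*E) <= sg*(d1*a1 + d2*a2)).
  { apply sq_ge; auto. replace ((sg*(d1*a1+d2*a2))^2) with ((sg*sg)*(d1*a1+d2*a2)^2) by ring.
    rewrite Hsg, Rmult_1_l. eapply Rle_trans; [apply cs2|].
    replace ((m*E)^2) with ((E^2)*(m*m)) by ring. rewrite H.
    apply Rmult_le_compat_r; lra. }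
  assert (C3 : -(E*E) <= sg*(d1*e1 + d2*e2)).
  { apply sq_ge; [nra|]. replace ((sg*(d1*e1+d2*e2))^2) with ((sg*sg)*(d1*e1+d2*e2)^2) by ring.
    rewrite Hsg, Rmult_1_l. eapply Rle_trans; [apply cs2|].
    replace ((E*E)^2) with ((E^2)*(E^2)) by ring.
    apply Rmult_le_compat; try lra; nra. }
  replace (sg * ((s*(sg*a1+d1)) * (s*(a1+e1)) + (s*(sg*a2+d2)) * (s*(a2+e2))))
    with ((s*s) * ((sg*sg)*(a1^2+a2^2) + (sg*sg)*(a1*e1+a2*e2) + sg*(d1*a1+d2*a2) + sg*(d1*e1+d2*e2))) by ring.
  rewrite Hsg. apply Rmult_lt_0_compat; [nra|]. rewrite <- H. nra.
Qed.

Lemma pow2_pos j : (0 < Nat.pow 2 j)%nat.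
Proof. apply Nat.neq_0_lt_0, Nat.pow_nonzero; lia. Qed.

Lemma nat_decomp f j :
  f = (Nat.pow 2 (S j) * (f / Nat.pow 2 (S j)) + (f mod Nat.pow 2 j + Nat.pow 2 j * ((f / Nat.pow 2 j) mod 2)))%nat.
Proof.
  pose proof (pow2_pos j).
  assert (E : (Nat.pow 2 (S j) = Nat.pow 2 j * 2)%nat) by (simpl; lia).
  rewrite <- (Nat.Div0.mod_mul_r f (Nat.pow 2 j) 2).
  rewrite <- E. apply Nat.div_mod_eq.
Qed.

Lemma angle k j f : (j < k)%nat ->
  phase (Nat.pow 2 k) (Nat.pow 2 (k - 1 - j)) f
   - 2 * PI * INR (f mod Nat.pow 2 j) / INR (Nat.pow 2 (S j))
  = PI * INR ((f / Nat.pow 2 j) mod 2) + 2 * INR (f / Nat.pow 2 (S j)) * PI.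
Proof.
  intros Hj. unfold phase.
  assert (Hk : Nat.pow 2 k = (Nat.pow 2 (k-1-j) * (Nat.pow 2 j * 2))%nat).
  { replace (Nat.pow 2 j * 2)%nat with (Nat.pow 2 (S j)) by (simpl; lia). rewrite <- Nat.pow_add_r. f_equal. lia. }
  rewrite Hk. rewrite (nat_decomp f j) at 1.
  assert (E : (Nat.pow 2 (S j) = Nat.pow 2 j * 2)%nat) by (simpl; lia).
  rewrite E.
  pose proof (pow2_pos j). pose proof (pow2_pos (k-1-j)).
  assert (0 < INR (Nat.pow 2 j)) by (apply lt_0_INR; lia).
  assert (0 < INR (Nat.pow 2 (k-1-j))) by (apply lt_0_INR; lia).
  rewrite !mult_INR, !plus_INR, !mult_INR. simpl (INR 2).
  field. lra.
Qed.

Lemma nth_flat2 (a b : nat -> R) (l : list nat) p :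
  (p < length l)%nat ->
  nth (2 * p) (flat_map (fun q => [a q; b q]) l) 0 = a (nth p l 0%nat) /\
  nth (S (2 * p)) (flat_map (fun q => [a q; b q]) l) 0 = b (nth p l 0%nat).
Proof.
  revert p; induction l as [|x l IH]; intros p Hp; simpl in Hp; [lia|].
  destruct p as [|p]; simpl; [auto|].
  replace (p + S (p + 0))%nat with (S (2 * p)) by lia. simpl. apply IH. lia.
Qed.

Lemma length_flat2 (a b : nat -> R) (l : list nat) :
  length (flat_map (fun q => [a q; b q]) l) = (2 * length l)%nat.
Proof. induction l; simpl; [auto|]. rewrite IHl. lia. Qed.

Lemma length_samples k xr xi : length (samples k xr xi) = (2 * (k + 1))%nat.
Proof.
  unfold samples, Qlist. rewrite length_flat2. simpl. rewrite length_map, length_seq. lia.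
Qed.

Lemma nth_samples k xr xi i : (i < k)%nat ->
  nth (2 + 2 * i) (samples k xr xi) 0 = samp_re (Nat.pow 2 k) xr xi (Nat.pow 2 i) /\
  nth (3 + 2 * i) (samples k xr xi) 0 = samp_im (Nat.pow 2 k) xr xi (Nat.pow 2 i).
Proof.
  intros Hi. unfold samples.
  destruct (nth_flat2 (samp_re (Nat.pow 2 k) xr xi) (samp_im (Nat.pow 2 k) xr xi) (Qlist k) (S i)) as [H1 H2].
  { unfold Qlist; simpl; rewrite length_map, length_seq; lia. }
  replace (2 + 2 * i)%nat with (2 * S i)%nat by lia.
  replace (3 + 2 * i)%nat with (S (2 * S i))%nat by lia.
  rewrite H1, H2. unfold Qlist. simpl nth.
  rewrite (nth_indep _ 0%nat (Nat.pow 2 0)) by (rewrite length_map, length_seq; lia).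
  rewrite map_nth, seq_nth by lia. simpl. auto.
Qed.

Lemma nth_samples0 k xr xi :
  nth 0 (samples k xr xi) 0 = samp_re (Nat.pow 2 k) xr xi 0 /\
  nth 1 (samples k xr xi) 0 = samp_im (Nat.pow 2 k) xr xi 0.
Proof. unfold samples, Qlist. simpl. auto. Qed.

Definition stepT (L i : nat) (cs sn : R) (t1 t2 : dtree) : dtree :=
 Bin OMul (2+2*i) 0 (Bin OMul (3+2*i) 1 (Bin OAdd (L+0) (L+1)
 (Bin OMul (3+2*i) 0 (Bin OMul (2+2*i) 1 (Bin OSub (L+3) (L+4)
 (Cst cs (Cst sn (Bin OMul (L+2) (L+6) (Bin OMul (L+5) (L+7)
 (Bin OAdd (L+8) (L+9) (Cst 0 (Cmp (L+10) (L+11) t1 t2)))))))))))).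

Lemma runBin o i j t regs l : run (Bin o i j t) (regs ++ l) =
  run t (regs ++ (l ++ [apply_binop o (nth i (regs ++ l) 0) (nth j (regs ++ l) 0)])).
Proof. simpl. rewrite app_assoc. reflexivity. Qed.
Lemma runCst c t regs l : run (Cst c t) (regs ++ l) = run t (regs ++ (l ++ [c])).
Proof. simpl. rewrite app_assoc. reflexivity. Qed.
Lemma runCmp i j t1 t2 regs : run (Cmp i j t1 t2) regs =
  if Rle_dec (nth i regs 0) (nth j regs 0) then run t1 regs else run t2 regs.
Proof. reflexivity. Qed.

Ltac simp_nth Hi := repeat first [ rewrite app_nth2_plus | rewrite app_nth1 by (rewrite ?length_app; simpl; lia) ];
   cbn [app nth apply_binop].

Lemma run_stepT i cs sn t1 t2 regs : (3 + 2*i < length regs)%nat ->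
  let a := nth (2+2*i) regs 0 in let b := nth (3+2*i) regs 0 in
  let c := nth 0 regs 0 in let d := nth 1 regs 0 in
  exists vals, length vals = 12%nat /\
  run (stepT (length regs) i cs sn t1 t2) regs =
  if Rle_dec ((a*c + b*d)*cs + (b*c - a*d)*sn) 0 then run t1 (regs ++ vals) else run t2 (regs ++ vals).
Proof.
  intros Hi a b c d. unfold stepT.
  remember (length regs) as L eqn:HL. rewrite <- (app_nil_r regs). rewrite HL.
  rewrite runBin; simp_nth Hi.
  rewrite runBin; simp_nth Hi.
  rewrite runBin; simp_nth Hi.
  rewrite runBin; simp_nth Hi.
  rewrite runBin; simp_nth Hi.
  rewrite runBin; simp_nth Hi.
  rewrite runCst; cbn [app].
  rewrite runCst; cbn [app].
  rewrite runBin; simp_nth Hi.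
  rewrite runBin; simp_nth Hi.
  rewrite runBin; simp_nth Hi.
  rewrite runCst; cbn [app].
  rewrite runCmp. simp_nth Hi.
  rewrite (app_nil_r regs). eexists; split; [|reflexivity]. reflexivity.
Qed.

Lemma rsum_nonneg n g : (forall i, 0 <= g i) -> 0 <= rsum n g.
Proof. intros H; induction n; simpl; [lra|]. specialize (H n). lra. Qed.

Lemma lin2 n (A B : nat -> R) c1 c2 :
  rsum n (fun i => c1 * A i + c2 * B i) = c1 * rsum n A + c2 * rsum n B.
Proof. induction n; simpl; [ring|]. rewrite IHn; ring. Qed.

Lemma rot_sum n xr xi (th : nat -> R) ps :
  rsum n (fun i => xr i * cos (th i) - xi i * sin (th i)) * cos ps
  + rsum n (fun i => xr i * sin (th i) + xi i * cos (th i)) * sin ps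
  = rsum n (fun i => xr i * cos (th i - ps) - xi i * sin (th i - ps)) /\
  rsum n (fun i => xr i * sin (th i) + xi i * cos (th i)) * cos ps
  - rsum n (fun i => xr i * cos (th i) - xi i * sin (th i)) * sin ps
  = rsum n (fun i => xr i * sin (th i - ps) + xi i * cos (th i - ps)).
Proof.
  set (A := fun i => xr i * cos (th i) - xi i * sin (th i)).
  set (B := fun i => xr i * sin (th i) + xi i * cos (th i)).
  split.
  - rewrite (rsum_ext n (fun i => xr i * cos (th i - ps) - xi i * sin (th i - ps))
       (fun i => cos ps * A i + sin ps * B i)).
    + rewrite lin2. ring.
    + intros. unfold A, B. rewrite cos_minus, sin_minus. ring.
  - rewrite (rsum_ext n (fun i => xr i * sin (th i - ps) + xi i * cos (th i - ps))
       (fun i => cos ps * B i + (- sin ps) * A i)).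
    + rewrite lin2. ring.
    + intros. unfold A, B. rewrite cos_minus, sin_minus. ring.
Qed.

Lemma key k xr xi f j : heavy (Nat.pow 2 k) xr xi f -> (j < k)%nat ->
  let n := Nat.pow 2 k in let q := Nat.pow 2 (k - 1 - j) in
  let ps := 2 * PI * INR (f mod Nat.pow 2 j) / INR (Nat.pow 2 (S j)) in
  let a := samp_re n xr xi q in let b := samp_im n xr xi q in
  let c := samp_re n xr xi 0 in let d := samp_im n xr xi 0 in
  let t := (a*c + b*d) * cos ps + (b*c - a*d) * sin ps in
  let bit := ((f / Nat.pow 2 j) mod 2)%nat in
  (bit = 0%nat -> 0 < t) /\ (bit = 1%nat -> t < 0).
Proof.
  intros [Hf [Hnz Hheavy]] Hj n q ps a b c d t bit.
  set (s := / sqrt (INR n)).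
  assert (Hs : 0 < s).
  { unfold s. apply Rinv_0_lt_compat, sqrt_lt_R0, lt_0_INR. apply pow2_pos. }
  set (phi := fun i => phase n q i - ps).
  set (th := phase n q).
  set (sg := if Nat.eqb bit 0 then 1 else -1).
  assert (Hbit : (bit = 0 \/ bit = 1)%nat) by (unfold bit; pose proof (Nat.mod_upper_bound (f / Nat.pow 2 j) 2); lia).
  assert (Hang : phi f = PI * INR bit + 2 * INR (f / Nat.pow 2 (S j)) * PI) by (apply angle; auto).
  assert (Hcos : cos (phi f) = sg /\ sin (phi f) = 0).
  { rewrite Hang, cos_period, sin_period. unfold sg.
    destruct Hbit as [-> | ->]; simpl; rewrite ?Rmult_0_r, ?Rmult_1_r, ?cos_0, ?sin_0, ?cos_PI, ?sin_PI; auto. }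
  destruct Hcos as [Hc Hsn].
  assert (Hsg : sg * sg = 1) by (unfold sg; destruct (Nat.eqb bit 0); ring).
  destruct (rot_sum n xr xi th ps) as [R1 R2].
  assert (HU1 : a * cos ps + b * sin ps = s * rsum n (fun i => xr i * cos (phi i) - xi i * sin (phi i))).
  { unfold a, b, samp_re, samp_im. fold s. fold th. unfold phi. fold th. rewrite <- R1. ring. }
  assert (HU2 : b * cos ps - a * sin ps = s * rsum n (fun i => xr i * sin (phi i) + xi i * cos (phi i))).
  { unfold a, b, samp_re, samp_im. fold s. fold th. unfold phi. fold th. rewrite <- R2. ring. }
  assert (Hph0 : cos (phase n 0 f) = 1 /\ sin (phase n 0 f) = 0).
  { unfold phase. rewrite Nat.mul_0_l. simpl INR. replace (2 * PI * 0 / INR n) with 0 by (unfold Rdiv; ring).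
    rewrite cos_0, sin_0; auto. }
  pose proof (decomp n xr xi phi f Hf) as D1.
  pose proof (decomp n xr xi (phase n 0) f Hf) as D0.
  rewrite Hc, Hsn in D1. destruct Hph0 as [Hc0 Hs0]. rewrite Hc0, Hs0 in D0.
  assert (HE : 0 <= Eerr n xr xi f).
  { apply rsum_nonneg. intros i. destruct (Nat.eqb i f); [lra|apply cmod_nonneg]. }
  pose proof (core (xr f) (xi f)
    (rsum n (fun i => xr i * cos (phi i) - xi i * sin (phi i)) - sg * xr f)
    (rsum n (fun i => xr i * sin (phi i) + xi i * cos (phi i)) - sg * xi f)
    (rsum n (fun i => xr i * cos (phase n 0 i) - xi i * sin (phase n 0 i)) - xr f)
    (rsum n (fun i => xr i * sin (phase n 0 i) + xi i * cos (phase n 0 i)) - xi f)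
    (Eerr n xr xi f) sg s Hnz Hheavy) as Hcore.
  assert (Ht : t = (s * rsum n (fun i => xr i * cos (phi i) - xi i * sin (phi i))) * c
                 + (s * rsum n (fun i => xr i * sin (phi i) + xi i * cos (phi i))) * d).
  { rewrite <- HU1, <- HU2. unfold t. ring. }
  assert (Hcd : c = s * rsum n (fun i => xr i * cos (phase n 0 i) - xi i * sin (phase n 0 i)) /\
                d = s * rsum n (fun i => xr i * sin (phase n 0 i) + xi i * cos (phase n 0 i))).
  { unfold c, d, samp_re, samp_im. fold s. auto. }
  destruct Hcd as [Hc' Hd'].
  assert (Hpos : 0 < sg * t).
  { rewrite Ht, Hc', Hd'.
    match goal with |- 0 < sg * (?X1 * ?Y1 + ?X2 * ?Y2) => idtac end.
    eapply Rlt_le_trans; [apply Hcore|]; clear Hcore.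
    - replace (xr f * sg - xi f * 0) with (sg * xr f) in D1 by ring.
      replace (xr f * 0 + xi f * sg) with (sg * xi f) in D1 by ring. exact D1.
    - replace (xr f * 1 - xi f * 0) with (xr f) in D0 by ring.
      replace (xr f * 0 + xi f * 1) with (xi f) in D0 by ring. exact D0.
    - exact Hsg.
    - exact Hs.
    - exact HE.
    - right. ring. }
  unfold sg in Hpos. split; intros Hb; rewrite Hb in Hpos; simpl in Hpos; lra.
Qed.

Fixpoint build (k m j r L : nat) : dtree :=
  match m with
  | O => Leaf r
  | S m' => stepT L (k - 1 - j)
      (cos (2 * PI * INR r / INR (Nat.pow 2 (S j))))
      (sin (2 * PI * INR r / INR (Nat.pow 2 (S j))))
      (build k m' (S j) (r + Nat.pow 2 j) (L + 12))
      (build k m' (S j) r (L + 12))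
  end.

Lemma depth_build k m j r L : (depth (build k m j r L) <= 13 * m)%nat.
Proof.
  revert j r L; induction m; intros; simpl; [lia|].
  pose proof (IHm (S j) (r + Nat.pow 2 j)%nat (L+12)%nat).
  pose proof (IHm (S j) r (L+12)%nat). lia.
Qed.

Lemma build_S k m j r L : build k (S m) j r L = stepT L (k - 1 - j)
      (cos (2 * PI * INR r / INR (Nat.pow 2 (S j))))
      (sin (2 * PI * INR r / INR (Nat.pow 2 (S j))))
      (build k m (S j) (r + Nat.pow 2 j) (L + 12))
      (build k m (S j) r (L + 12)).
Proof. reflexivity. Qed.

Lemma build_ok k xr xi f : heavy (Nat.pow 2 k) xr xi f ->
  forall m j r junk L, (j + m = k)%nat -> r = (f mod Nat.pow 2 j)%nat ->
  L = length (samples k xr xi ++ junk) ->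
  run (build k m j r L) (samples k xr xi ++ junk) = f.
Proof.
  intros Hh. induction m; intros j r junk L Hjm Hr HL.
  - simpl. subst r L. replace j with k by lia. apply Nat.mod_small. destruct Hh; auto.
  - rewrite build_S. pose proof (length_samples k xr xi) as Hlen.
    assert (Hj : (j < k)%nat) by lia.
    rewrite HL.
    destruct (run_stepT (k - 1 - j)
      (cos (2 * PI * INR r / INR (Nat.pow 2 (S j))))
      (sin (2 * PI * INR r / INR (Nat.pow 2 (S j))))
      (build k m (S j) (r + Nat.pow 2 j) (length (samples k xr xi ++ junk) + 12))
      (build k m (S j) r (length (samples k xr xi ++ junk) + 12))
      (samples k xr xi ++ junk)) as [vals [Hv Hrun]].
    { rewrite length_app. lia. }
    rewrite Hrun. clear Hrun.
    rewrite !app_nth1 by lia.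
    destruct (nth_samples k xr xi (k - 1 - j)) as [Ha Hb]; [lia|].
    destruct (nth_samples0 k xr xi) as [Hc Hd].
    rewrite Ha, Hb, Hc, Hd.
    pose proof (key k xr xi f j Hh Hj) as K. cbv zeta in K. rewrite <- Hr in K.
    assert (Hmod : (f mod Nat.pow 2 (S j) = f mod Nat.pow 2 j + Nat.pow 2 j * ((f / Nat.pow 2 j) mod 2))%nat).
    { replace (Nat.pow 2 (S j)) with (Nat.pow 2 j * 2)%nat by (simpl; lia).
      apply Nat.Div0.mod_mul_r. }
    assert (Hbit : ((f / Nat.pow 2 j) mod 2 = 0 \/ (f / Nat.pow 2 j) mod 2 = 1)%nat)
      by (pose proof (Nat.mod_upper_bound (f / Nat.pow 2 j) 2); lia).
    assert (HL' : (length (samples k xr xi ++ junk) + 12)%nat = length (samples k xr xi ++ (junk ++ vals))).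
    { rewrite !length_app. lia. }
    rewrite <- app_assoc.
    destruct Hbit as [H0 | H1].
    + destruct K as [K _]. specialize (K H0).
      destruct (Rle_dec _ 0); [lra|].
      apply IHm; auto; lia.
    + destruct K as [_ K]. specialize (K H1).
      destruct (Rle_dec _ 0); [|lra].
      apply IHm; auto; lia.
Qed.

Theorem lemma6p1 :
  (forall (k : nat) (xr xi yr yi : nat -> R) (f g : nat),
      heavy (Nat.pow 2 k) xr xi f ->
      heavy (Nat.pow 2 k) yr yi g ->
      samples k xr xi = samples k yr yi ->
      f = g) /\
  (exists c : nat, forall k : nat, exists T : dtree,
      (depth T <= c * (k + 1))%nat /\
      forall (xr xi : nat -> R) (f : nat),
        heavy (Nat.pow 2 k) xr xi f -> run T (samples k xr xi) = f).
Proof.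
  assert (Hrun : forall k xr xi f, heavy (Nat.pow 2 k) xr xi f ->
     run (build k k 0 0 (2 * (k + 1))) (samples k xr xi) = f).
  { intros k xr xi f Hh. rewrite <- (app_nil_r (samples k xr xi)).
    apply (build_ok k xr xi f Hh k 0 0 [] (2 * (k+1))); auto.
    rewrite app_nil_r, length_samples. auto. }
  split.
  - intros k xr xi yr yi f g Hx Hy Hs.
    rewrite <- (Hrun k xr xi f Hx), <- (Hrun k yr yi g Hy), Hs. reflexivity.
  - exists 13%nat. intros k. exists (build k k 0 0 (2 * (k + 1))). split.
    + pose proof (depth_build k k 0 0 (2 * (k+1))). lia.
    + apply Hrun.
Qed.
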